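(* Let $\Omega$ be a region of $\mathcal{C}^*_{n,A}$ ($n\ge1$), $\bm x\in\Omega$ with associated permutation $\pi$, and let $D_{1,\pi}(\Omega)$ be the Dyck path defined below. Then $\mathrm{level}(\Omega)=\ell(D_{1,\pi}(\Omega))$.
   Context: Let $A=\{a_1,\dots,a_m\}$ with $a_1>\dots>a_m>0$; $\mathcal{C}^*_{n,A}$ is the arrangement in $\mathbb{R}^n$ of hyperplanes $x_i-x_j=a_k$ ($i\ne j$, $1\le k\le m$); regions are connected components of the complement. The level of $X\subseteq\mathbb{R}^n$ is the smallest integer $\ell\ge0$ such that there are a linear subspace $W$ of dimension $\ell$ and $r>0$ with $X\subseteq\{\bm x:\min_{\bm y\in W}\|\bm x-\bm y\|\le r\}$. The associated permutation of $\bm x$ is the unique $\pi\in\mathfrak{S}_n$ with $x_{\pi(1)}\ge\dots\ge x_{\pi(n)}$ and $\pi^{-1}(i)<\pi^{-1}(j)$ whenever $i<j$ and $x_i=x_j$. Let $\alpha_i=\#\{j\in[n]:x_{\pi(i)}-x_{\pi(j)}>a_1\}$, so $\alpha_1\ge\dots\ge\alpha_n=0$ and $\alpha_i\le n-i$. $D_{1,\pi}(\Omega)$ is the lattice path from $(0,n)$ to $(n,0)$ with steps $E=(1,0)$, $S=(0,-1)$ given by $E^{n-\alpha_1}SE^{\alpha_1-\alpha_2}S\cdots E^{\alpha_{n-1}-\alpha_n}S$ (its steps labeled by $\pi$); it is a Dyck path. For a Dyck path $D$ from $(0,n)$ to $(n,0)$, $\ell(D)$ is the number of $k\in\{1,\dots,n\}$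 such that $D$ passes through $(k,n-k)$ (its number of prime components). *)

(* Defs.v *)
From HB Require Import structures.
From mathcomp Require Import all_boot all_order all_algebra all_fingroup.
From mathcomp Require Import all_classical all_reals all_analysis.
Set Implicit Arguments. Unset Strict Implicit. Unset Printing Implicit Defensive.
Import Order.TTheory GRing.Theory Num.Theory.
Import numFieldNormedType.Exports.
Local Open Scope classical_set_scope.
Local Open Scope ring_scope.

(* Points of R^n are row vectors 'rV[R]_n; coordinate i of x is x ord0 i
   (coordinates are 0-indexed: x_{i+1} in the paper is x ord0 i).
   A = {a_1 > ... > a_m > 0} is a sequence a = [:: a_1; ...; a_m]. *)

Section Defs.
Variable R : realType.

Definition admissible (a : seq R) : Prop :=
  (0 < size a)%N /\ sorted (fun u v => v < u) a /\ all (fun u => 0 < u) a.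

Definition arr_complement (n : nat) (a : seq R) : set 'rV[R]_n :=
  [set x | forall i j : 'I_n, i != j -> forall k, k \in a -> x ord0 i - x ord0 j != k].

Definition is_region (n : nat) (a : seq R) (Om : set 'rV[R]_n) : Prop :=
  exists2 x0 : 'rV[R]_n, arr_complement a x0 &
    Om = connected_component (arr_complement a : set 'rV[R]_n) x0.

Definition euclid (n : nat) (x : 'rV[R]_n) : R :=
  Num.sqrt (\sum_(i < n) (x ord0 i) ^+ 2).

(* X is contained in the closed r-neighbourhood of some linear subspace of
   dimension l (the subspace is the row space of a rank-l matrix W) *)
Definition level_le (n : nat) (X : set 'rV[R]_n) (l : nat) : Prop :=
  exists W : 'M[R]_(l, n), \rank W = l /\
   exists2 r : R, 0 < r &
     forall x, X x -> exists y : 'rV[R]_n, (y <= W)%MS /\ euclid (x - y) <= r.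

Definition is_level (n : nat) (X : set 'rV[R]_n) (l : nat) : Prop :=
  level_le X l /\ forall l', level_le X l' -> (l <= l')%N.

(* p is the associated permutation of x (positions 0-indexed):
   x_{p 0} >= ... >= x_{p (n-1)}, ties broken by increasing index *)
Definition assoc_perm (n : nat) (x : 'rV[R]_n) (p : 'S_n) : Prop :=
  (forall i j : 'I_n, (i < j)%N -> x ord0 (p j) <= x ord0 (p i)) /\
  (forall i j : 'I_n, (i < j)%N -> x ord0 i = x ord0 j ->
      ((p^-1)%g i < (p^-1)%g j)%N).

Definition alpha (n : nat) (a : seq R) (x : 'rV[R]_n) (p : 'S_n) (i : 'I_n) : nat :=
  #|[set j : 'I_n | x ord0 (p i) - x ord0 (p j) > head 0 a]|.

End Defs.

(* lattice paths as sequences of steps: true = E = (1,0), false = S = (0,-1) *)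
(* E^{n-al_1} S E^{al_1-al_2} S ... E^{al_{n-1}-al_n} S, given al = [al_1..al_n] *)
Definition dyck_of_alphas (n : nat) (al : seq nat) : seq bool :=
  flatten [seq rcons (nseq e true) false | e <- pairmap (fun u v => u - v)%N n al].

Definition D1 (R : realType) (n : nat) (a : seq R) (x : 'rV[R]_n) (p : 'S_n) : seq bool :=
  dyck_of_alphas n [seq alpha a x p i | i <- enum 'I_n].

Definition path_points (n : nat) (D : seq bool) : seq (nat * nat) :=
  [seq (count id (take t D), n - count negb (take t D))%N | t <- iota 0 (size D).+1].

Definition ell (n : nat) (D : seq bool) : nat :=
  count (fun k => (k, n - k)%N \in path_points n D) (iota 1 n).

(* Main.v *)
Require Import Defs.
From HB Require Import structures.
From mathcomp Require Import all_boot all_order all_algebra all_fingroup.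
From mathcomp Require Import all_classical all_reals all_analysis.
From mathcomp Require Import ring lra.
Import Order.TTheory GRing.Theory Num.Theory.
Import numFieldNormedType.Exports.
Local Open Scope classical_set_scope.
Local Open Scope ring_scope.
From mathcomp Require Import zify.

Local Close Scope ring_scope.
Local Close Scope classical_set_scope.

Definition dyk (es : seq nat) : seq bool :=
  flatten [seq rcons (nseq e true) false | e <- es].

Lemma dyk_cons e es : dyk (e :: es) = nseq e true ++ false :: dyk es.
Proof. by rewrite /dyk /= cat_rcons. Qed.

Lemma cS_nseq m : count negb (nseq m true) = 0.
Proof. by elim: m. Qed.
Lemma cE_nseq m : count id (nseq m true) = m.
Proof. by elim: m => //= m ->. Qed.
Lemma take_nseq' (T : Type) t e (x : T) : take t (nseq e x) = nseq (minn t e) x.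
Proof. by elim: e t => [|e IH] [|t] //=; rewrite IH minnSS. Qed.
Lemma countS_take_nseq e t : count negb (take t (nseq e true)) = 0.
Proof. by rewrite take_nseq' cS_nseq. Qed.

Lemma countE_take_nseq e t : count id (take t (nseq e true)) = minn t e.
Proof. by rewrite take_nseq' cE_nseq. Qed.

Lemma dykP (es : seq nat) k E :
  (exists t, count negb (take t (dyk es)) = k /\ count id (take t (dyk es)) = E) <->
  (k <= size es /\ sumn (take k es) <= E <= sumn (take k es) + nth 0 es k).
Proof.
elim: es k E => [|e es IH] k E.
  rewrite /dyk /=; split.
    by case=> t [<- <-]; case: t.
  by case; rewrite leqn0 => /eqP -> /=; rewrite addn0 leqn0 => /eqP ->; exists 0.
rewrite dyk_cons; split.
  case=> t [Hk HE]; case: (leqP t e) => te.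
    rewrite take_cat size_nseq in Hk HE.
    case: (ltnP t e) => te'.
      rewrite te' in Hk HE; rewrite countS_take_nseq in Hk; subst k.
      by rewrite countE_take_nseq in HE; rewrite /=; lia.
    have tee : t = e by lia.
    subst t; rewrite ltnn subnn /= cats0 in Hk HE.
    rewrite cS_nseq in Hk; subst k.
    by rewrite /=; move: HE; rewrite cE_nseq; lia.
  rewrite take_cat size_nseq ltnNge (ltnW te) /= in Hk HE.
  move: Hk HE; case Ht: (t - e) => [|t']; first lia.
  rewrite /= !count_cat /= cS_nseq cE_nseq add0n.
  move=> Hk HE.
  have [H1 /andP[H2 H3]] : (count negb (take t' (dyk es)) <= size es /\
        sumn (take (count negb (take t' (dyk es))) es) <= count id (take t' (dyk es)) <=
        sumn (take (count negb (take t' (dyk es))) es) + nth 0 es (count negb (take t' (dyk es)))).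
    by apply/IH; exists t'.
  subst k E; rewrite /= ltnS H1 /=.
  rewrite !add0n; split=> //; lia.
case=> Hk HE; case: k Hk HE => [|k] Hk HE.
  exists E; rewrite take_cat size_nseq /=.
  move: HE; rewrite /= add0n => HE.
  case: (ltnP E e) => Ee.
    by rewrite countS_take_nseq countE_take_nseq; split=> //; lia.
  have -> : E = e by lia.
  rewrite subnn ?ltnn /= ?cats0 ?take0 ?cats0.
  by rewrite cS_nseq cE_nseq.
move: HE; rewrite /= => HE.
have [t' [Ht1 Ht2]] : exists t, count negb (take t (dyk es)) = k /\ count id (take t (dyk es)) = E - e.
  apply/IH; split; first by move: Hk; rewrite /= ltnS.
  lia.
exists (e + t').+1; rewrite take_cat size_nseq.
have -> : ((e + t').+1 < e) = false by lia.
have -> : (e + t').+1 - e = t'.+1 by lia.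
rewrite /= !count_cat /= cS_nseq cE_nseq.
rewrite Ht1 Ht2; split=> //; lia.
Qed.

Lemma tele m al k : k <= size al -> path (fun u v => v <= u) m al ->
  sumn (take k (pairmap (fun u v => (u - v)%N) m al)) + nth 0 (m :: al) k = m.
Proof.
elim: al m k => [|a al IH] m [|k] //= Hk /andP[am Hp].
by rewrite -addnA IH //; lia.
Qed.

Lemma cS_dyk es : count negb (dyk es) = size es.
Proof. by elim: es => //= e es IH; rewrite dyk_cons count_cat /= cS_nseq IH. Qed.

Lemma count_take_le (T : Type) (P : pred T) t s : count P (take t s) <= count P s.
Proof. by rewrite -{2}(cat_take_drop t s) count_cat leq_addr. Qed.

Lemma ellP n al : size al = n -> (forall i, i < n -> nth 0 al i <= n - i.+1) ->
  path (fun u v => v <= u) n al ->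
  ell n (dyck_of_alphas n al) = count (fun i => nth 0 al i == n - i.+1) (iota 0 n).
Proof.
move=> Hs Hb Hp.
rewrite /ell (iotaDl 1 0) count_map; apply: eq_in_count => i; rewrite mem_iota /= => Hi.
have HD : dyck_of_alphas n al = dyk (pairmap (fun u v => (u - v)%N) n al) by [].
have Hes : size (pairmap (fun u v => (u - v)%N) n al) = n by rewrite size_pairmap.
have Ht := fun h => @tele n al i.+1 h Hp; rewrite /= in Ht.
have := Hb i Hi; rewrite HD /path_points.
set D := dyk _ => Hbi.
apply/idP/idP.
  case/mapP=> t _ [E1 E2].
  have cSle : count negb (take t D) <= n by rewrite -Hes -cS_dyk count_take_le.
  have cSE : count negb (take t D) = i.+1 by lia.
  have := (dykP (pairmap (fun u v => (u - v)%N) n al) i.+1 i.+1).1.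
  case; first by exists t.
  move=> _ /andP[H1 _]; have := Ht ltac:(lia); lia.
move=> /eqP Hal.
have [t [Ht1 Ht2]] := (dykP (pairmap (fun u v => (u - v)%N) n al) i.+1 i.+1).2
   ltac:(split; [lia|]; have := Ht ltac:(lia); lia).
apply/mapP; case: (leqP t (size D)) => tD.
  by exists t; [rewrite mem_iota; lia | rewrite Ht1 Ht2].
exists (size D); first by rewrite mem_iota; lia.
by rewrite take_size -(take_oversize (ltnW tD)) Ht1 Ht2.
Qed.

Local Open Scope ring_scope.
Local Open Scope classical_set_scope.

Lemma sign_pres (R : realType) (T : topologicalType) (A : set T) (f : T -> R) x y :
  connected A -> continuous f -> (forall z, A z -> f z != 0) -> A x -> A y ->
  f x < 0 -> f y < 0.
Proof.
move=> cA cf nz Ax Ay fx; rewrite ltNge; apply/negP => fy.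
have fy0 : 0 < f y by rewrite lt_neqAle eq_sym nz.
have : is_interval (f @` A).
  apply/connected_intervalP/connected_continuous_connected => //.
  exact: continuous_subspaceT.
move=> /(_ (f x) (f y)) /(_ _ _ 0) []; [by exists x|by exists y|by rewrite (ltW fx) ltW|].
by move=> z Az fz0; move: (nz z Az); rewrite fz0 eqxx.
Qed.

Lemma coordc (R : realType) n (i j : 'I_n) (c : R) :
  continuous (fun y : 'rV[R]_n => y ord0 i - y ord0 j - c).
Proof.
move=> y.
have h1 := @coord_continuous R 1 n ord0 i y.
have h2 := @coord_continuous R 1 n ord0 j y.
exact: (cvgB (cvgB h1 h2) (cvg_cst c)).
Qed.

Lemma seg_conn (R : realType) n (x d : 'rV[R]_n) (t : R) :
  connected [set x + s *: d | s in `[0, t]].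
Proof.
apply: connected_continuous_connected; first exact: segment_connected.
apply: continuous_subspaceT => s.
have h1 : (fun s0 : R => s0 *: d) @ s --> s *: d.
  by apply: cvgZl; exact: cvg_id.
exact: (cvgD (cvg_cst x) h1).
Qed.

Lemma euclid_coord (R : realType) n (v : 'rV[R]_n) i : `|v ord0 i| <= euclid v.
Proof.
rewrite /euclid -sqrtr_sqr; apply: ler_wsqrtr.
rewrite (bigD1 i) //= lerDl; apply: sumr_ge0 => j _; exact: sqr_ge0.
Qed.

Lemma euclid_bound (R : realType) n (v : 'rV[R]_n) (M : R) :
  0 <= M -> (forall i, `|v ord0 i| <= M) -> euclid v <= n%:R * M.
Proof.
move=> M0 H; rewrite /euclid.
have nM : 0 <= n%:R * M by rewrite mulr_ge0.
rewrite -(ger0_norm nM) -sqrtr_sqr; apply: ler_wsqrtr.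
apply: (@le_trans _ _ (\sum_(i < n) M ^+ 2)).
  apply: ler_sum => i _; have := H i; rewrite ler_norml => /andP[h1 h2]; nra.
rewrite sumr_const card_ord -mulr_natr exprMn.
have : (n%:R : R) <= n%:R ^+ 2.
  by rewrite -natrX ler_nat; case: (n) => // k; rewrite expnS leq_pmulr.
have := sqr_ge0 M; nra.
Qed.

Lemma dot_bound (R : realType) n m (v : 'rV[R]_n) (K : 'M[R]_(n, m)) j :
  `|(v *m K) ord0 j| <= euclid v * \sum_i `|K i j|.
Proof.
rewrite mxE mulr_sumr; apply: (le_trans (ler_norm_sum _ _ _)).
apply: ler_sum => i _; rewrite normrM; apply: ler_wpM2r => //; exact: euclid_coord.
Qed.

Lemma dir_sub (R : realType) n l (W : 'M[R]_(l, n)) (r : R) (x z : 'rV[R]_n) :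
  (forall t : R, 0 <= t -> exists y : 'rV[R]_n, (y <= W)%MS /\ euclid (x + t *: z - y) <= r) ->
  (z <= W)%MS.
Proof.
move=> H; rewrite submxE; apply/eqP/rowP => j; rewrite [RHS]mxE.
set K := cokermx W; set d := (z *m K) ord0 j.
apply/eqP; apply: contraT => dz.
set S := \sum_i `|K i j|; set c := (x *m K) ord0 j.
have S0 : 0 <= S by apply: sumr_ge0.
have d0 : 0 < `|d| by rewrite normr_gt0.
set t := (`|c| + `|r| * S + 1) / `|d|.
have t0 : 0 <= t by rewrite divr_ge0 // addr_ge0 // addr_ge0 // mulr_ge0.
have [y [yW hy]] := H t t0.
have yK : y *m K = 0 by move: yW; rewrite submxE => /eqP.
have e : ((x + t *: z - y) *m K) ord0 j = c + t * d.
  by rewrite mulmxBl mulmxDl -scalemxAl yK subr0 [LHS]mxE [X in _ + X]mxE.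
have hb := @dot_bound _ _ _ (x + t *: z - y) K j; rewrite e in hb.
have hb2 : `|c + t * d| <= `|r| * S.
  apply: (le_trans hb); apply: ler_wpM2r => //; apply: (le_trans hy); exact: ler_norm.
have htd : `|t * d| = `|c| + `|r| * S + 1.
  by rewrite normrM (ger0_norm t0) /t mulfVK // gt_eqF.
have := ler_normB (c + t * d) c; rewrite [c + _]addrC addrK htd.
move=> h; suff : (1 : R) <= 0 by rewrite ler10.
rewrite addrC in h; have := normr_ge0 c; lra.
Qed.

Local Close Scope classical_set_scope.

Lemma count_gt i N : (i < N)%N -> count (fun k => i < k)%N (iota 0 N) = (N - i.+1)%N.
Proof.
move=> iN; have -> : N = (i.+1 + (N - i.+1))%N by lia.
rewrite iotaD count_cat add0n.
rewrite (eq_in_count (a2 := pred0)); last by move=> k; rewrite mem_iota /=; lia.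
rewrite count_pred0 add0n (eq_in_count (a2 := predT)); last by move=> k; rewrite mem_iota /=; lia.
by rewrite count_predT size_iota; lia.
Qed.

Lemma card_gt N (i : 'I_N) : #|[set j : 'I_N | (i < j)%N]| = (N - i.+1)%N.
Proof.
rewrite cardsE cardE /enum_mem size_filter -enumT.
rewrite -(@count_gt i N (ltn_ord i)) -val_enum_ord count_map.
by apply: eq_count => j.
Qed.

Section Main.
Variables (R : realType) (n : nat) (a : seq R) (x : 'rV[R]_n.+1) (p : 'S_n.+1).
Hypothesis adm : admissible a.
Hypothesis xC : arr_complement a x.
Hypothesis Hs : forall i j : 'I_n.+1, (i < j)%N -> x ord0 (p j) <= x ord0 (p i).

Local Notation A1 := (head 0 a).

Lemma A1_in : A1 \in a.
Proof. by case: adm; case: a => // h t _ _; rewrite mem_head. Qed.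

Lemma A1_ge c : c \in a -> 0 < c /\ c <= A1.
Proof.
case: adm => _ [srt pos] ca; split; first by move/allP: pos; apply.
move: srt ca; case: a => // h t /= srt; rewrite inE => /orP[/eqP -> //|ct].
have tr : transitive (fun u v : R => v < u) by move=> ? ? ? h1 h2; exact: lt_trans h2 h1.
have := order_path_min tr srt.
by move/allP/(_ c ct)/ltW.
Qed.

Lemma A1_gt0 : 0 < A1.
Proof. by case: (@A1_ge A1 A1_in). Qed.

Lemma le_ord {i j : 'I_n.+1} : (j <= i)%N -> x ord0 (p i) <= x ord0 (p j).
Proof.
rewrite leq_eqVlt => /orP[/eqP ji|]; last exact: Hs.
by have -> : i = j by apply: val_inj.
Qed.

Definition sx (k : nat) : R := x ord0 (p (inord k)).

Lemma sx_le {k j} : (k <= j)%N -> (j <= n)%N -> sx j <= sx k.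
Proof. by move=> kj jn; apply: le_ord; rewrite !inordK //; lia. Qed.

Definition aset (i : 'I_n.+1) := [set j : 'I_n.+1 | A1 < x ord0 (p i) - x ord0 (p j)].

Lemma alphaE i : alpha a x p i = #|aset i|.
Proof.
apply: eq_card => j; rewrite !inE; apply/idP/idP => h.
  by move/set_mem: h.
by apply/mem_set.
Qed.

Lemma aset_sub i : aset i \subset [set j : 'I_n.+1 | (i < j)%N].
Proof.
apply/fintype.subsetP => j; rewrite !inE => h; rewrite ltnNge; apply/negP => ji.
have := le_ord ji; have := A1_gt0; move: h; lra.
Qed.

Lemma alpha_le i : (alpha a x p i <= n - i)%N.
Proof. by rewrite alphaE; have := subset_leq_card (aset_sub i); rewrite card_gt. Qed.

Lemma alpha_eq i : (alpha a x p i == n - i)%N = (aset i == [set j : 'I_n.+1 | (i < j)%N]).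
Proof. by rewrite alphaE -(subset_leqif_cards (aset_sub i)).2 card_gt. Qed.

Lemma alpha_mono {i j : 'I_n.+1} : (i <= j)%N -> (alpha a x p j <= alpha a x p i)%N.
Proof.
move=> ij; rewrite !alphaE; apply: subset_leq_card; apply/fintype.subsetP => k; rewrite !inE.
have := le_ord ij; lra.
Qed.

Definition cutn (k : nat) : bool := (k <= n)%N && (alpha a x p (inord k) == n - k)%N.

Lemma cut_gap {k j} : cutn k -> (k < j)%N -> (j <= n)%N -> A1 < sx k - sx j.
Proof.
case/andP=> kn; have := alpha_eq (inord k); rewrite inordK ?ltnS // => -> /eqP E kj jn.
have : (inord j : 'I_n.+1) \in [set j0 : 'I_n.+1 | (k < j0)%N].
  by rewrite inE inordK.
by rewrite -E inE.
Qed.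

Lemma noncut_gap {k} : (k < n)%N -> ~~ cutn k -> sx k - sx k.+1 <= A1.
Proof.
move=> kn; apply: contraR; rewrite -ltNge => h; rewrite /cutn (ltnW kn) /=.
have := alpha_eq (inord k); rewrite inordK; last lia.
have kn1 : (k < n.+1)%N by lia.
move=> ->; rewrite finset.eqEsubset; apply/andP; split.
  by have := aset_sub (inord k); rewrite inordK.
apply/fintype.subsetP => j; rewrite !inE.
move=> kj; have := @sx_le k.+1 j kj (ltn_ord j : (j <= n)%N).
rewrite /sx inord_val; move: h; rewrite /sx; lra.
Qed.

Lemma cut_last : cutn n.
Proof.
rewrite /cutn leqnn subnn /=; have := alpha_le (inord n); rewrite inordK //.
by rewrite subnn leqn0.
Qed.

Definition lead (k : nat) : nat := (k + find cutn (iota k (n.+1 - k)))%N.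

Lemma lead_has {k} : (k <= n)%N -> has cutn (iota k (n.+1 - k)).
Proof.
move=> kn; apply/hasP; exists n; last exact: cut_last.
by rewrite mem_iota; lia.
Qed.

Lemma lead_cut {k} : (k <= n)%N -> cutn (lead k).
Proof.
move=> kn; have := nth_find 0 (lead_has kn).
have := lead_has kn; rewrite has_find size_iota => h.
by rewrite nth_iota.
Qed.

Lemma lead_le {k} : (k <= n)%N -> (lead k <= n)%N.
Proof.
move=> kn; have := lead_has kn; rewrite has_find size_iota /lead; lia.
Qed.

Lemma lead_ge k : (k <= lead k)%N.
Proof. exact: leq_addr. Qed.

Lemma lead_noncut {k j} : (k <= j)%N -> (j < lead k)%N -> ~~ cutn j.
Proof.
move=> kj jl; have := @before_find _ 0 cutn (iota k (n.+1 - k)) (j - k).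
have -> : nth 0 (iota k (n.+1 - k)) (j - k) = j.
  rewrite nth_iota; first lia.
  have : (find cutn (iota k (n.+1 - k)) <= size (iota k (n.+1 - k)))%N by apply: find_size.
  rewrite size_iota /lead in jl *; lia.
by move=> h; apply: negbT; apply: h; rewrite /lead in jl; move: jl kj; set F := find _ _; lia.
Qed.

Lemma lead_min k j : cutn j -> (k <= j)%N -> (lead k <= j)%N.
Proof.
move=> cj kj; rewrite leqNgt; apply/negP => jl.
by move: (lead_noncut kj jl); rewrite cj.
Qed.

Lemma lead_id k : cutn k -> lead k = k.
Proof. by move=> ck; apply/eqP; rewrite eqn_leq lead_min // lead_ge. Qed.

Definition cuts : seq nat := [seq k <- iota 0 n.+1 | cutn k].

Lemma cuts_uniq : uniq cuts.
Proof. by rewrite filter_uniq // iota_uniq. Qed.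

Lemma mem_cuts k : (k \in cuts) = cutn k.
Proof.
rewrite mem_filter mem_iota; case ck: (cutn k) => //=.
by move: ck => /andP[kn _]; lia.
Qed.

Lemma cutn_le {k} : cutn k -> (k <= n)%N.
Proof. by case/andP. Qed.

Lemma nth_cuts {m} : (m < size cuts)%N -> cutn (nth 0 cuts m).
Proof. by move=> ms; rewrite -mem_cuts mem_nth. Qed.

Definition pos (q : 'I_n.+1) : nat := val ((p^-1)%g q).

Lemma p_pos q : p (inord (pos q)) = q.
Proof. by rewrite /pos inord_val permKV. Qed.

Lemma pos_p k : (k <= n)%N -> pos (p (inord k)) = k.
Proof. by move=> kn; rewrite /pos permK; apply: inordK. Qed.

Lemma pos_le q : (pos q <= n)%N.
Proof. rewrite /pos -ltnS; exact: ltn_ord. Qed.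

Definition L := size cuts.

Definition Wm : 'M[R]_(L, n.+1) := \matrix_(m, q) ((lead (pos q) == nth 0 cuts m)%:R).
Definition Em : 'M[R]_(n.+1, L) := \matrix_(q, m) ((pos q == nth 0 cuts m)%:R).

Lemma sum_pos (f : 'I_n.+1 -> R) k : (k <= n)%N ->
  \sum_q f q * (pos q == k)%:R = f (p (inord k)).
Proof.
move=> kn; rewrite (bigD1 (p (inord k))) //= pos_p // eqxx mulr1 big1 ?addr0 //.
move=> q qne; rewrite (_ : (pos q == k) = false) ?mulr0 //.
by apply/negbTE; apply: contra qne => /eqP <-; rewrite p_pos.
Qed.

Lemma cuts_inj (m m' : 'I_L) : nth 0 cuts m = nth 0 cuts m' -> m = m'.
Proof.
move=> h; apply: val_inj => /=; apply/eqP.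
by rewrite -(nth_uniq 0 (ltn_ord m) (ltn_ord m') cuts_uniq) h.
Qed.

Lemma WE : Wm *m Em = 1%:M.
Proof.
apply/matrixP => m m'; rewrite !mxE.
under eq_bigr do rewrite !mxE.
have cm' := nth_cuts (ltn_ord m').
have cl := cutn_le cm'.
rewrite (sum_pos (fun q => (lead (pos q) == nth 0 cuts m)%:R)) //.
rewrite pos_p // lead_id //; congr ((nat_of_bool _)%:R).
case: (eqVneq m m') => [->|ne]; first by rewrite !eqxx.
apply/negP => /eqP h; move/eqP: ne; apply; exact/esym/cuts_inj.
Qed.

Lemma rankW : \rank Wm = L.
Proof.
apply/eqP; rewrite eqn_leq rank_leq_row /=.
apply: (@mulmx1_min_rank _ L _ _ Wm 1%:M Em); by rewrite mul1mx WE.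
Qed.

Definition proj (y : 'rV[R]_n.+1) : 'rV[R]_n.+1 :=
  (\row_m y ord0 (p (inord (nth 0 cuts m)))) *m Wm.

Lemma projE y q : proj y ord0 q = y ord0 (p (inord (lead (pos q)))).
Proof.
rewrite !mxE; under eq_bigr do rewrite !mxE.
set l := lead (pos q).
have cl : cutn l := lead_cut (pos_le q).
have il : (index l cuts < L)%N by rewrite index_mem mem_cuts.
rewrite (bigD1 (Ordinal il)) //= nth_index ?mem_cuts // eqxx mulr1 big1 ?addr0 //.
move=> m mne; rewrite (_ : (l == nth 0 cuts m) = false) ?mulr0 //.
apply/negbTE; apply: contra mne => /eqP h; apply/eqP; apply: cuts_inj => /=.
by rewrite nth_index ?mem_cuts.
Qed.

Definition Zr (k : nat) : 'rV[R]_n.+1 := \row_q ((lead (pos q) < k)%N%:R).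

Lemma row_W m : row m Wm = Zr (nth 0 cuts m).+1 - Zr (nth 0 cuts m).
Proof.
apply/rowP => q; rewrite !mxE ltnS.
case: (ltngtP (lead (pos q)) (nth 0 cuts m)) => h.
- by rewrite subrr.
- by rewrite subr0.
- by rewrite subr0.
Qed.

Local Notation Om' := (connected_component (arr_complement a) x).

Lemma pres {y u v} : Om' y -> u != v -> x ord0 u - x ord0 v < A1 ->
  y ord0 u - y ord0 v < A1.
Proof.
move=> Oy uv hx; rewrite -subr_lt0.
apply: (@sign_pres R _ Om' (fun z : 'rV[R]_n.+1 => z ord0 u - z ord0 v - A1) x y).
- exact: component_connected.
- exact: coordc.
- move=> z /connected_component_sub Cz; rewrite subr_eq0; exact: Cz u v uv A1 A1_in.
- exact: connected_component_refl.
- exact: Oy.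
- by rewrite subr_lt0.
Qed.

Definition ty (y : 'rV[R]_n.+1) (k : nat) : R := y ord0 (p (inord k)).

Lemma step {y k} : Om' y -> (k < n)%N -> ~~ cutn k -> `|ty y k - ty y k.+1| < A1.
Proof.
move=> Oy kn nc.
have uv : p (inord k) != p (inord k.+1) :> 'I_n.+1.
  rewrite (inj_eq perm_inj); apply/eqP => /(congr1 (@nat_of_ord n.+1)); rewrite !inordK; lia.
have hx : x ord0 (p (inord k)) - x ord0 (p (inord k.+1)) < A1.
  rewrite lt_neqAle; have := noncut_gap kn nc; rewrite /sx => ->; rewrite andbT.
  exact: xC _ _ uv A1 A1_in.
have hx2 : x ord0 (p (inord k.+1)) - x ord0 (p (inord k)) < A1.
  have := @sx_le k k.+1 (leqnSn k) kn; rewrite /sx; have := A1_gt0; lra.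
have h1 := pres Oy uv hx.
have uv' : p (inord k.+1) != p (inord k) by rewrite eq_sym.
have h2 := pres Oy uv' hx2.
rewrite ltr_norml /ty; apply/andP; split; lra.
Qed.

Lemma chain y k d : Om' y -> (k <= n)%N -> (k + d <= lead k)%N ->
  `|ty y k - ty y (k + d)| <= d%:R * A1.
Proof.
move=> Oy kn; elim: d => [|d IH] hd; first by rewrite addn0 subrr normr0 mul0r.
have hl := lead_le kn.
have h1 := IH ltac:(lia).
have nc : ~~ cutn (k + d) by apply: (lead_noncut (k:=k)); lia.
have h2 := @step y (k + d) Oy ltac:(lia) nc.
rewrite addnS.
have := ler_normD (ty y k - ty y (k + d)) (ty y (k + d) - ty y (k + d).+1).
rewrite addrA subrK => h3.
apply: (le_trans h3); rewrite [d.+1%:R]mulrSr mulrDl mul1r.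
apply: lerD => //; exact: ltW.
Qed.

Lemma chain_lead y q : Om' y -> `|y ord0 q - proj y ord0 q| <= n.+1%:R * A1.
Proof.
move=> Oy; rewrite projE; have kn := pos_le q; have hl := lead_le kn.
have lg := lead_ge (pos q).
have := @chain y (pos q) (lead (pos q) - pos q) Oy kn ltac:(lia).
have -> : (pos q + (lead (pos q) - pos q))%N = lead (pos q) by lia.
rewrite /ty p_pos => h; apply: (le_trans h); apply: ler_wpM2r; first exact: ltW A1_gt0.
rewrite ler_nat; lia.
Qed.

Lemma upper : level_le Om' L.
Proof.
exists Wm; split; first exact: rankW.
have A0 := A1_gt0.
exists (n.+1%:R * (n.+1%:R * A1) + 1).
  by rewrite ltr_pwDr // mulr_ge0 // mulr_ge0 // ltW.
move=> y Oy; exists (proj y); split; first exact: submxMl.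
have hb : euclid (y - proj y) <= n.+1%:R * (n.+1%:R * A1).
  apply: euclid_bound; first by rewrite mulr_ge0 // ltW.
  by move=> q; have := chain_lead y q Oy; rewrite !mxE => h; exact: h.
by apply: (le_trans hb); rewrite lerDl.
Qed.

Lemma gap_lemma u v : (lead (pos u) < lead (pos v))%N -> A1 < x ord0 u - x ord0 v.
Proof.
move=> h.
have iN := pos_le u; have jN := pos_le v.
have ci := lead_cut iN; have li := lead_le iN.
have jgt : (lead (pos u) < pos v)%N.
  rewrite ltnNge; apply/negP => ji; have := lead_min (pos v) (lead (pos u)) ci ji; lia.
have g := cut_gap ci jgt jN.
have s1 := sx_le (lead_ge (pos u)) li.
have e1 : sx (pos u) = x ord0 u by rewrite /sx p_pos.
have e2 : sx (pos v) = x ord0 v by rewrite /sx p_pos.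
lra.
Qed.

Lemma ray k t : 0 <= t -> Om' (x + t *: Zr k).
Proof.
move=> t0.
have inC s : 0 <= s -> arr_complement a (x + s *: Zr k).
  move=> s0 u v uv c ca; rewrite !mxE.
  have [c0 cA] := A1_ge c ca.
  case hu: (lead (pos u) < k)%N; case hv: (lead (pos v) < k)%N => /=; rewrite ?mulr1 ?mulr0 ?addr0.
  - by rewrite opprD addrACA subrr addr0; exact: xC.
  - have g := gap_lemma u v ltac:(lia); apply/eqP => e; lra.
  - have g := gap_lemma v u ltac:(lia); apply/eqP => e; lra.
  - exact: xC.
apply: (@connected_component_max _ _ ((fun s => x + s *: Zr k) @` `[0, t]%classic)).
- by exists 0; [rewrite /= in_itv /= lexx | rewrite scale0r addr0].
- by move=> z [s]; rewrite /= in_itv /= => /andP[s0 _] <-; apply: inC.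
- exact: seg_conn.
- by exists t => //; rewrite /= in_itv /= t0 lexx.
Qed.

Lemma lower l : level_le Om' l -> (L <= l)%N.
Proof.
move=> [W' [rk [r r0 cov]]].
have Zsub k : (Zr k <= W')%MS.
  apply: (@dir_sub R n.+1 l W' r x (Zr k)) => t t0.
  exact: cov _ (ray k t t0).
have : (Wm <= W')%MS.
  apply/row_subP => m; rewrite row_W.
  case/submxP: (Zsub (nth 0 cuts m).+1) => D1 ->.
  case/submxP: (Zsub (nth 0 cuts m)) => D2 ->.
  by rewrite -mulmxBl submxMl.
by move/mxrankS; rewrite rankW rk.
Qed.

Lemma level_L : is_level Om' L.
Proof. split; [exact: upper | exact: lower]. Qed.

Lemma ell_L : ell n.+1 (D1 a x p) = L.
Proof.
rewrite /D1.
set al := [seq alpha a x p i | i <- enum 'I_n.+1].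
have nth_al i : (i < n.+1)%N -> nth 0 al i = alpha a x p (inord i).
  move=> h; rewrite (nth_map ord0) ?size_enum_ord //; congr alpha.
  by apply: val_inj; rewrite /= nth_enum_ord // inordK.
have h1 : size al = n.+1 by rewrite size_map size_enum_ord.
have h2 : forall i, (i < n.+1)%N -> (nth 0 al i <= n.+1 - i.+1)%N.
  by move=> i hi; rewrite nth_al // subSS; have := alpha_le (inord i); rewrite inordK.
have h3 : path (fun u v => (v <= u)%N) n.+1 al.
  apply/(pathP 0) => i; rewrite h1; case: i => [|i] hi /=.
    by rewrite nth_al //; have := alpha_le (inord 0); lia.
  rewrite !nth_al //; try lia.
  by apply: alpha_mono; rewrite !inordK //; lia.
rewrite (@ellP n.+1 al h1 h2 h3) /L /cuts size_filter.
apply: eq_in_count => i; rewrite mem_iota => /andP[_ hi].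
by rewrite nth_al // /cutn subSS (_ : (i <= n)%N = true).
Qed.

End Main.

Local Open Scope classical_set_scope.

Theorem theorem3p5 (R : realType) (n : nat) (a : seq R)
  (Om : set 'rV[R]_n) (x : 'rV[R]_n) (p : 'S_n) :
  (1 <= n)%N -> admissible a -> is_region a Om -> Om x -> assoc_perm x p ->
  is_level Om (ell n (D1 a x p)).
Proof.
move: Om x p; case: n => [//|n] Om x p _ adm [x0 x0C ->] Omx [Hs _].
have xC : arr_complement a x := connected_component_sub Omx.
rewrite (same_connected_component Omx) (ell_L _ _ _ _ _ adm Hs).
exact: (level_L _ _ _ _ _ adm xC Hs).
Qed.
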